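(* Let $\Gamma$ be a finite simplicial graph whose set $S$ of social vertices is non-empty, let $k=|S|$, $\Delta=\Gamma\setminus S$, and $n=|\Delta|$ (number of vertices). Let $\Phi_\Delta\le\mathrm{GL}(n,\mathbb{Z})$ be the image of $\mathrm{Aut}(A_\Delta)$ under the homomorphism induced by abelianising $A_\Delta$. Write matrices in $\mathrm{GL}(kn,\mathbb{Z})$ in $k\times k$ block form with $n\times n$ blocks, $M=(A_{ij})$. Let $Q\le\mathrm{GL}(kn,\mathbb{Z})$ be the subgroup $Q=G_1\times G_2$ where $G_1=\{(a_{ij}I_n)\mid (a_{ij})\in\mathrm{GL}(k,\mathbb{Z})\}$ and $G_2=\{\mathrm{Diag}(M,\dots,M)\mid M\in\Phi_\Delta\}$. Then the centraliser $C(Q)$ of $Q$ in $\mathrm{GL}(kn,\mathbb{Z})$ is a subgroup of $\{\mathrm{Diag}(M,\dots,M)\mid M\in\mathrm{GL}(n,\mathbb{Z})\}$.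
   Context: For a finite simplicial graph $\Gamma=(V,E)$, $A_\Gamma=\langle v\in V\mid [v,w]=1 \text{ for }(v,w)\in E\rangle$. A vertex is social if it is adjacent to every other vertex. $I_n$ is the $n\times n$ identity matrix, and $\mathrm{Diag}(D_1,\dots,D_k)$ denotes the block diagonal matrix with diagonal blocks $D_1,\dots,D_k$ and zero off-diagonal blocks. *)

(* Defs.v *)
From mathcomp Require Import all_boot all_order all_algebra.
From mathcomp.real_closed Require Export mxtens.
From Stdlib Require Export Relations.
Set Implicit Arguments. Unset Strict Implicit. Unset Printing Implicit Defensive.
Import GRing.Theory Num.Theory.
Local Open Scope ring_scope.

(* A finite simplicial graph: vertex type V (a finType) with a symmetric,
   irreflexive adjacency relation e. *)

Definition social (V : finType) (e : rel V) : {set V} :=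
  [set v | [forall w, (w != v) ==> e v w]].

Definition delta (V : finType) (e : rel V) : {set V} := ~: social e.

(* Words in the generators of A_Delta and their inverses:
   (v, false) = v, (v, true) = v^-1. *)
Definition letter (V : finType) := (V * bool)%type.

Section RAAG.
Variables (V : finType) (e : rel V).
Local Notation D := (delta e).

Inductive raag_step : seq (letter V) -> seq (letter V) -> Prop :=
| raag_free u w x b : x \in D ->
    raag_step (u ++ (x, b) :: (x, ~~ b) :: w) (u ++ w)
| raag_comm u w x y b c : x \in D -> y \in D -> e x y ->
    raag_step (u ++ (x, b) :: (y, c) :: w) (u ++ (y, c) :: (x, b) :: w).

Definition raag_eq : relation (seq (letter V)) := clos_refl_sym_trans _ raag_step.

Definition Dword (w : seq (letter V)) : bool := all (fun x => x.1 \in D) w.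

Definition inv_word (w : seq (letter V)) : seq (letter V) :=
  rev [seq (x.1, ~~ x.2) | x <- w].

Definition subst (phi : V -> seq (letter V)) (w : seq (letter V)) :=
  flatten [seq (if x.2 then inv_word (phi x.1) else phi x.1) | x <- w].

Definition raag_endo (phi : V -> seq (letter V)) : Prop :=
  (forall v, v \in D -> Dword (phi v)) /\
  (forall w1 w2, Dword w1 -> Dword w2 -> raag_eq w1 w2 ->
     raag_eq (subst phi w1) (subst phi w2)).

Definition raag_aut (phi : V -> seq (letter V)) : Prop :=
  raag_endo phi /\
  exists psi, raag_endo psi /\
    forall w, Dword w ->
      raag_eq (subst psi (subst phi w)) w /\ raag_eq (subst phi (subst psi w)) w.

Definition expsum (v : V) (w : seq (letter V)) : int :=
  \sum_(x <- w) (if x.1 == v then (if x.2 then -1 else 1) else 0).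

(* matrix of the induced map on the abelianisation Z^n, with the generators
   of Delta ordered by enum_val; column s = image of the s-th generator *)
Definition ab_mx (phi : V -> seq (letter V)) : 'M[int]_#|D| :=
  \matrix_(r, s) expsum (enum_val r) (phi (enum_val s)).

Definition PhiDelta (M : 'M[int]_#|D|) : Prop :=
  exists phi, raag_aut phi /\ M = ab_mx phi.

End RAAG.

(* Main.v *)
Require Import Defs.
From mathcomp Require Import all_boot all_order all_algebra.
From mathcomp.real_closed Require Import mxtens.
Import GRing.Theory Num.Theory.
Local Open Scope ring_scope.

Lemma tens11 k n : (1%:M : 'M[int]_k) *t (1%:M : 'M[int]_n) = 1%:M.
Proof.
apply/matrixP=> p q; case: (mxtens_indexP p)=> a r; case: (mxtens_indexP q)=> b s.
rewrite tensmxE !mxE (can_eq (@mxtens_indexK _ _)) xpair_eqE.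
by case: (a == b); case: (r == s); rewrite ?mulr1 ?mulr0 ?mul0r.
Qed.

Lemma tensmxDl k n (A B : 'M[int]_k) (C : 'M[int]_n) :
  (A + B) *t C = A *t C + B *t C.
Proof. by apply/matrixP=> p q; rewrite !mxE mulrDl. Qed.

Lemma entR k n (Z : 'M[int]_(k * n)) (i j b : 'I_k) (s : 'I_n) p :
  (Z *m (delta_mx i j *t (1%:M : 'M_n))) p (mxtens_index (b, s))
  = (j == b)%:R * Z p (mxtens_index (i, s)).
Proof.
rewrite mxE (bigD1 (mxtens_index (i, s))) //= tensmxE !mxE !eqxx /= mulr1.
rewrite big1 ?addr0; first by rewrite mulrC eq_sym.
move=> t; case: (mxtens_indexP t)=> c r ht.
rewrite tensmxE !mxE.
have [ci|ci] := eqVneq c i; last by rewrite /= mul0r mulr0.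
have [rs|rs] := eqVneq r s; last by rewrite mulr0 mulr0.
by move: ht; rewrite ci rs eqxx.
Qed.

Lemma entL k n (Z : 'M[int]_(k * n)) (i j a : 'I_k) (r : 'I_n) q :
  ((delta_mx i j *t (1%:M : 'M_n)) *m Z) (mxtens_index (a, r)) q
  = (a == i)%:R * Z (mxtens_index (j, r)) q.
Proof.
rewrite mxE (bigD1 (mxtens_index (j, r))) //= tensmxE !mxE !eqxx /= andbT mulr1.
rewrite big1 ?addr0 //.
move=> t; case: (mxtens_indexP t)=> c s ht.
rewrite tensmxE !mxE.
have [ci|ci] := eqVneq c j; last by rewrite andbF /= mul0r mul0r.
have [rs|rs] := eqVneq r s; last by rewrite mulr0 mul0r.
by move: ht; rewrite ci rs eqxx.
Qed.

Lemma L1 k n (i0 : 'I_k) (Z : 'M[int]_(k * n)) :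
  (forall A : 'M[int]_k, A \in unitmx ->
     Z *m (A *t (1%:M : 'M_n)) = (A *t (1%:M : 'M_n)) *m Z) ->
  Z = (1%:M : 'M_k) *t (\matrix_(r, s) Z (mxtens_index (i0, r)) (mxtens_index (i0, s))).
Proof.
move=> H.
have F : forall i j : 'I_k, i != j -> forall p q,
    (Z *m (delta_mx i j *t (1%:M : 'M_n))) p q = ((delta_mx i j *t (1%:M : 'M_n)) *m Z) p q.
  move=> i j ij p q.
  have U : (1%:M + delta_mx i j : 'M[int]_k) \in unitmx.
    have : (1%:M + delta_mx i j) *m (1%:M - delta_mx i j) = (1%:M : 'M[int]_k).
      rewrite mulmxDl !mulmxBr !mul1mx !mulmx1 mul_delta_mx_0; first by rewrite subr0 subrK.
      by rewrite eq_sym.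
    by case/mulmx1_unit.
  have := H _ U; rewrite tensmxDl tens11 mulmxDr mulmxDl mulmx1 mul1mx.
  by move/addrI=> ->.
apply/matrixP=> p q; case: (mxtens_indexP p)=> a r; case: (mxtens_indexP q)=> b s.
rewrite tensmxE !mxE.
have [ab|ab] := eqVneq a b.
  subst b; rewrite mul1r.
  have [ai|ai] := eqVneq a i0; first by subst.
  have := F a i0 ai (mxtens_index (a, r)) (mxtens_index (i0, s)).
  by rewrite entR entL !eqxx !mul1r => ->.
have ba : b != a by rewrite eq_sym.
have := F b a ba (mxtens_index (a, r)) (mxtens_index (a, s)).
by rewrite entR entL eqxx (negbTE ab) mul1r !mul0r => ->.
Qed.


Lemma subst_id (V : finType) (w : seq (letter V)) :
  subst (fun v => [:: (v, false)]) w = w.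
Proof.
elim: w => //= [[x b] w IH]; move: IH; rewrite /subst /= => ->.
by case: b.
Qed.

Lemma Phi1 (V : finType) (e : rel V) : @PhiDelta V e 1%:M.
Proof.
exists (fun v => [:: (v, false)]); split.
  have E : raag_endo e (fun v => [:: (v, false)]).
    split; first by move=> v vD; rewrite /Dword /= vD.
    by move=> w1 w2 _ _; rewrite !subst_id.
  split=> //; exists (fun v => [:: (v, false)]); split=> // w _.
  by rewrite !subst_id; split; apply: rst_refl.
apply/matrixP=> r s; rewrite !mxE /expsum big_seq1 /=.
rewrite (inj_eq enum_val_inj) eq_sym.
by case: (s == r).
Qed.

Theorem mainTheorem5 (V : finType) (e : rel V)
  (e_sym : symmetric e) (e_irr : irreflexive e)
  (S_ne : social e != set0)
  (X : 'M[int]_(#|social e| * #|delta e|)) :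
  X \in unitmx ->
  (forall (A : 'M[int]_#|social e|) (M : 'M[int]_#|delta e|),
     A \in unitmx -> @PhiDelta V e M ->
     X *m ((A *t (1%:M : 'M[int]_#|delta e|)) *m ((1%:M : 'M[int]_#|social e|) *t M))
     = ((A *t (1%:M : 'M[int]_#|delta e|)) *m ((1%:M : 'M[int]_#|social e|) *t M)) *m X) ->
  exists2 M : 'M[int]_#|delta e|, M \in unitmx & X = (1%:M : 'M[int]_#|social e|) *t M.
Proof.
move=> Xu H.
have [v vS] := set0Pn _ S_ne.
pose i0 := enum_rank_in vS v.
have HX : forall A : 'M[int]_#|social e|, A \in unitmx ->
    X *m (A *t (1%:M : 'M_#|delta e|)) = (A *t (1%:M : 'M_#|delta e|)) *m X.
  move=> A Au; have := H A 1%:M Au (@Phi1 V e).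
  by rewrite tensmx_mul !mulmx1.
pose Y := invmx X.
have HY : forall A : 'M[int]_#|social e|, A \in unitmx ->
    Y *m (A *t (1%:M : 'M_#|delta e|)) = (A *t (1%:M : 'M_#|delta e|)) *m Y.
  move=> A Au; set C := A *t _.
  rewrite -[Y *m C]mulmx1 -(mulmxV Xu) !mulmxA -(mulmxA Y C X) -HX // !mulmxA.
  by rewrite mulVmx // mul1mx.
have EX := @L1 _ _ i0 X HX; have EY := @L1 _ _ i0 Y HY.
set M := \matrix_(r, s) X _ _ in EX; set N := \matrix_(r, s) Y _ _ in EY.
exists M => //.
have XY : X *m Y = 1%:M by rewrite mulmxV.
rewrite EX EY tensmx_mul mulmx1 -(tens11 #|social e| #|delta e|) in XY.
have MN : M *m N = 1%:M.
  apply/matrixP=> r s.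
  have := congr1 (fun Z : 'M[int]_(#|social e| * #|delta e|) => Z (mxtens_index (i0, r)) (mxtens_index (i0, s))) XY.
  by rewrite /= !tensmxE !mxE eqxx !mul1r.
by case/mulmx1_unit: MN.
Qed.
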